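(* For every type theory $\mathcal T$ and $\mathcal R\in\{\equiv,=_\beta,=_{\beta\eta}\}$: if $B\vdash^{\mathcal T}_{\mathcal R}\Delta:\sigma$, then $\Delta$ is strongly normalizing with respect to $\to$, i.e. there is no infinite reduction sequence $\Delta\to\Delta_1\to\Delta_2\to\cdots$.
   Context: Type atoms: a set $\mathbb{A}$ of symbols; $\omega$ denotes a distinguished atom (the universal type). Intersection types over $\mathbb A$: $\sigma::= a\mid\sigma\to\sigma\mid\sigma\cap\sigma$ ($a\in\mathbb A$). An intersection type theory $\mathcal T$ over $\mathbb A$ is a set of inequalities $\sigma\le\tau$ (written $\sigma\le_{\mathcal T}\tau$) closed under (refl) $\sigma\le\sigma$; (incl) $\sigma\cap\tau\le\sigma$ and $\sigma\cap\tau\le\tau$; (glb) $\rho\le\sigma$ and $\rho\le\tau$ imply $\rho\le\sigma\cap\tau$; (trans) $\sigma\le\tau$ and $\tau\le\rho$ imply $\sigma\le\rho$. $\Delta$-terms: $\Delta::=u_\Delta\mid x\mid\lambda x{:}\sigma.\Delta\mid\Delta\,\Delta\mid\langle\Delta,\Delta\rangle\mid pr_1\Delta\mid pr_2\Delta\mid\Delta^\sigma$, where for every (not necessarily typable) $\Delta$-term $\Delta$ there is a constant $u_\Delta$. The essence $\|\Delta\|$ is the pure $\lambda$-term defined by $\|x\|=x$, $\|u_\Delta\|=\|\Delta\|$, $\|\Delta^\sigma\|=\|\Delta\|$, $\|\lambda x{:}\sigma.\Delta\|=\lambda x.\|\Delta\|$, $\|\Delta_1\Delta_2\|=\|\Delta_1\|\,\|\Delta_2\|$,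 $\|\langle\Delta_1,\Delta_2\rangle\|=\|\Delta_1\|$, $\|pr_i\Delta\|=\|\Delta\|$. Let $\mathcal R$ be one of $\equiv$ (syntactic identity up to $\alpha$), $=_\beta$, $=_{\beta\eta}$ on pure $\lambda$-terms. A basis $B$ is a finite set of declarations $x{:}\sigma$ with distinct variables. The typed system $\Delta^{\mathcal T}_{\mathcal R}$ derives $B\vdash^{\mathcal T}_{\mathcal R}\Delta:\sigma$ by: (top) $B\vdash u_\Delta:\omega$ if $\omega\in\mathbb A$; (ax) $B\vdash x:\sigma$ if $x{:}\sigma\in B$; ($\to$I) from $B,x{:}\sigma\vdash\Delta:\tau$ infer $B\vdash\lambda x{:}\sigma.\Delta:\sigma\to\tau$; ($\to$E) from $B\vdash\Delta_1:\sigma\to\tau$ and $B\vdash\Delta_2:\sigma$ infer $B\vdash\Delta_1\Delta_2:\tau$; ($\cap$I) from $B\vdash\Delta_1:\sigma$, $B\vdash\Delta_2:\tau$ and $\|\Delta_1\|\mathrel{\mathcal R}\|\Delta_2\|$ infer $B\vdash\langle\Delta_1,\Delta_2\rangle:\sigma\cap\tau$; ($\cap$E$_1$) from $B\vdash\Delta:\sigma\cap\tau$ infer $B\vdash pr_1\Delta:\sigma$; ($\cap$E$_2$) from $B\vdash\Delta:\sigma\cap\tau$ infer $B\vdash pr_2\Delta:\tau$; ($\le_{\mathcal T}$) from $B\vdash\Delta:\sigma$ and $\sigma\le_{\mathcal T}\tau$ infer $B\vdash\Delta^\tau:\tau$. Substitution $\Delta_1[\Delta_2/x]$ is capture-avoiding,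 with $u_{\Delta_1}[\Delta_2/x]=u_{\Delta_1[\Delta_2/x]}$ and $(\Delta_1^\sigma)[\Delta_2/x]=(\Delta_1[\Delta_2/x])^\sigma$. Notions of reduction: $(\beta)$ $(\lambda x{:}\sigma.\Delta_1)\Delta_2\to\Delta_1[\Delta_2/x]$; $(pr_i)$ $pr_i\langle\Delta_1,\Delta_2\rangle\to\Delta_i$ ($i=1,2$). ($(\lambda x{:}\sigma.\Delta_1)^\tau\Delta_2$ is not a redex.) $\to$ denotes the contextual closure of $(\beta)$ and $(pr_i)$, where no reduction is performed inside the index $\Delta$ of a constant $u_\Delta$. *)

(* Defs.v *)
(* Terms use de Bruijn indices (alpha-equivalence = equality). *)
From Stdlib Require Import List Relations Arith.
Import ListNotations.

Section Types.
Variable Atom : Type.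

Inductive typ : Type :=
| TAtom : Atom -> typ
| TArr : typ -> typ -> typ
| TInt : typ -> typ -> typ.
End Types.
Arguments TAtom {Atom} _.
Arguments TArr {Atom} _ _.
Arguments TInt {Atom} _ _.

Definition is_type_theory {Atom : Type} (le : typ Atom -> typ Atom -> Prop) : Prop :=
  (forall s, le s s) /\
  (forall s t, le (TInt s t) s) /\
  (forall s t, le (TInt s t) t) /\
  (forall r s t, le r s -> le r t -> le r (TInt s t)) /\
  (forall s t r, le s t -> le t r -> le s r).

Inductive lterm : Type :=
| LVar : nat -> lterm
| LLam : lterm -> lterm
| LApp : lterm -> lterm -> lterm.

Fixpoint llift (k c : nat) (t : lterm) : lterm :=
  match t with
  | LVar n => if Nat.ltb n c then LVar n else LVar (n + k)
  | LLam b => LLam (llift k (S c) b)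
  | LApp a b => LApp (llift k c a) (llift k c b)
  end.

Fixpoint lsubst (t : lterm) (n : nat) (s : lterm) : lterm :=
  match t with
  | LVar m =>
      match Nat.compare m n with
      | Lt => LVar m
      | Eq => llift n 0 s
      | Gt => LVar (pred m)
      end
  | LLam b => LLam (lsubst b (S n) s)
  | LApp a b => LApp (lsubst a n s) (lsubst b n s)
  end.

Inductive lbeta : lterm -> lterm -> Prop :=
| lbeta_redex : forall b a, lbeta (LApp (LLam b) a) (lsubst b 0 a)
| lbeta_lam : forall b b', lbeta b b' -> lbeta (LLam b) (LLam b')
| lbeta_appl : forall a a' b, lbeta a a' -> lbeta (LApp a b) (LApp a' b)
| lbeta_appr : forall a b b', lbeta b b' -> lbeta (LApp a b) (LApp a b').

(* one-step beta-eta (contextual closure); eta: \x. t x -> t, x not free in t *)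
Inductive lbetaeta : lterm -> lterm -> Prop :=
| lbe_beta : forall b a, lbetaeta (LApp (LLam b) a) (lsubst b 0 a)
| lbe_eta : forall t, lbetaeta (LLam (LApp (llift 1 0 t) (LVar 0))) t
| lbe_lam : forall b b', lbetaeta b b' -> lbetaeta (LLam b) (LLam b')
| lbe_appl : forall a a' b, lbetaeta a a' -> lbetaeta (LApp a b) (LApp a' b)
| lbe_appr : forall a b b', lbetaeta b b' -> lbetaeta (LApp a b) (LApp a b').

Inductive Rchoice : Type := RSyn | RBeta | RBetaEta.

Definition Rrel (R : Rchoice) : lterm -> lterm -> Prop :=
  match R with
  | RSyn => fun t u => t = u
  | RBeta => clos_refl_sym_trans lterm lbeta
  | RBetaEta => clos_refl_sym_trans lterm lbetaeta
  end.

Section Delta.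
Variable Atom : Type.

Inductive dterm : Type :=
| DU : dterm -> dterm                 (* constant u_Delta *)
| DVar : nat -> dterm
| DLam : typ Atom -> dterm -> dterm
| DApp : dterm -> dterm -> dterm
| DPair : dterm -> dterm -> dterm
| DPr1 : dterm -> dterm
| DPr2 : dterm -> dterm
| DCoe : dterm -> typ Atom -> dterm.

Fixpoint essence (d : dterm) : lterm :=
  match d with
  | DU d => essence d
  | DVar n => LVar n
  | DLam _ b => LLam (essence b)
  | DApp a b => LApp (essence a) (essence b)
  | DPair a _ => essence a
  | DPr1 a => essence a
  | DPr2 a => essence a
  | DCoe a _ => essence a
  end.

Fixpoint dlift (k c : nat) (t : dterm) : dterm :=
  match t with
  | DU d => DU (dlift k c d)
  | DVar n => if Nat.ltb n c then DVar n else DVar (n + k)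
  | DLam s b => DLam s (dlift k (S c) b)
  | DApp a b => DApp (dlift k c a) (dlift k c b)
  | DPair a b => DPair (dlift k c a) (dlift k c b)
  | DPr1 a => DPr1 (dlift k c a)
  | DPr2 a => DPr2 (dlift k c a)
  | DCoe a s => DCoe (dlift k c a) s
  end.

Fixpoint dsubst (t : dterm) (n : nat) (s : dterm) : dterm :=
  match t with
  | DU d => DU (dsubst d n s)
  | DVar m =>
      match Nat.compare m n with
      | Lt => DVar m
      | Eq => dlift n 0 s
      | Gt => DVar (pred m)
      end
  | DLam sg b => DLam sg (dsubst b (S n) s)
  | DApp a b => DApp (dsubst a n s) (dsubst b n s)
  | DPair a b => DPair (dsubst a n s) (dsubst b n s)
  | DPr1 a => DPr1 (dsubst a n s)
  | DPr2 a => DPr2 (dsubst a n s)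
  | DCoe a sg => DCoe (dsubst a n s) sg
  end.

(* one-step reduction: contextual closure of (beta), (pr1), (pr2),
   never reducing inside the index of a constant u_Delta *)
Inductive dred : dterm -> dterm -> Prop :=
| dred_beta : forall s b a, dred (DApp (DLam s b) a) (dsubst b 0 a)
| dred_pr1 : forall a b, dred (DPr1 (DPair a b)) a
| dred_pr2 : forall a b, dred (DPr2 (DPair a b)) b
| dred_lam : forall s b b', dred b b' -> dred (DLam s b) (DLam s b')
| dred_appl : forall a a' b, dred a a' -> dred (DApp a b) (DApp a' b)
| dred_appr : forall a b b', dred b b' -> dred (DApp a b) (DApp a b')
| dred_pairl : forall a a' b, dred a a' -> dred (DPair a b) (DPair a' b)
| dred_pairr : forall a b b', dred b b' -> dred (DPair a b) (DPair a b')
| dred_pr1c : forall a a', dred a a' -> dred (DPr1 a) (DPr1 a')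
| dred_pr2c : forall a a', dred a a' -> dred (DPr2 a) (DPr2 a')
| dred_coe : forall a a' s, dred a a' -> dred (DCoe a s) (DCoe a' s).

Definition strongly_normalizing (d : dterm) : Prop :=
  ~ exists f : nat -> dterm, f 0 = d /\ forall n, dred (f n) (f (S n)).

(* Typing. [omega = Some w] means the distinguished atom w = omega belongs
   to the atom set; [omega = None] means omega is not in the atom set.
   A basis is a list of types: de Bruijn index n is declared with type
   [nth n B] when n < length B. *)
Inductive typed (omega : option Atom) (le : typ Atom -> typ Atom -> Prop)
          (R : Rchoice) : list (typ Atom) -> dterm -> typ Atom -> Prop :=
| ty_top : forall B d w, omega = Some w -> typed omega le R B (DU d) (TAtom w)
| ty_ax : forall B n s, nth_error B n = Some s -> typed omega le R B (DVar n) s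
| ty_lam : forall B s b t, typed omega le R (s :: B) b t ->
           typed omega le R B (DLam s b) (TArr s t)
| ty_app : forall B a b s t, typed omega le R B a (TArr s t) ->
           typed omega le R B b s -> typed omega le R B (DApp a b) t
| ty_pair : forall B a b s t, typed omega le R B a s -> typed omega le R B b t ->
           Rrel R (essence a) (essence b) ->
           typed omega le R B (DPair a b) (TInt s t)
| ty_pr1 : forall B a s t, typed omega le R B a (TInt s t) ->
           typed omega le R B (DPr1 a) s
| ty_pr2 : forall B a s t, typed omega le R B a (TInt s t) ->
           typed omega le R B (DPr2 a) t
| ty_le : forall B a s t, typed omega le R B a s -> le s t ->
           typed omega le R B (DCoe a t) t.

End Delta.
Arguments DU {Atom} _.
Arguments DVar {Atom} _.
Arguments DLam {Atom} _ _.
Arguments DApp {Atom} _ _.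
Arguments DPair {Atom} _ _.
Arguments DPr1 {Atom} _.
Arguments DPr2 {Atom} _.
Arguments DCoe {Atom} _ _.
Arguments essence {Atom} _.
Arguments dlift {Atom} _ _ _.
Arguments dsubst {Atom} _ _ _.
Arguments dred {Atom} _ _.
Arguments strongly_normalizing {Atom} _.
Arguments typed {Atom} _ _ _ _ _ _.

(* Main.v *)
Require Import Defs.
From Stdlib Require Import List Relations Arith Lia.

Section SN.
Variable Atom : Type.
Notation tm := (dterm Atom).
Notation ty := (typ Atom).

Definition upr (xi : nat -> nat) (n : nat) : nat :=
  match n with 0 => 0 | S m => S (xi m) end.

Fixpoint ren (xi : nat -> nat) (t : tm) : tm :=
  match t with
  | DU d => DU (ren xi d)
  | DVar n => DVar (xi n)
  | DLam s b => DLam s (ren (upr xi) b)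
  | DApp a b => DApp (ren xi a) (ren xi b)
  | DPair a b => DPair (ren xi a) (ren xi b)
  | DPr1 a => DPr1 (ren xi a)
  | DPr2 a => DPr2 (ren xi a)
  | DCoe a s => DCoe (ren xi a) s
  end.

Definition ups (sg : nat -> tm) (n : nat) : tm :=
  match n with 0 => DVar 0 | S m => ren S (sg m) end.

Fixpoint psub (sg : nat -> tm) (t : tm) : tm :=
  match t with
  | DU d => DU (psub sg d)
  | DVar n => sg n
  | DLam s b => DLam s (psub (ups sg) b)
  | DApp a b => DApp (psub sg a) (psub sg b)
  | DPair a b => DPair (psub sg a) (psub sg b)
  | DPr1 a => DPr1 (psub sg a)
  | DPr2 a => DPr2 (psub sg a)
  | DCoe a s => DCoe (psub sg a) s
  end.

Definition scons (a : tm) (sg : nat -> tm) (n : nat) : tm :=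
  match n with 0 => a | S m => sg m end.

Lemma ren_ext : forall t xi zeta, (forall n, xi n = zeta n) -> ren xi t = ren zeta t.
Proof.
  induction t; intros xi zeta H; simpl; f_equal; auto.
  apply IHt; intros [|n]; simpl; auto.
Qed.

Lemma ren_id : forall t, ren (fun n => n) t = t.
Proof.
  induction t; simpl; f_equal; auto.
  rewrite <- IHt at 2; apply ren_ext; intros [|n]; reflexivity.
Qed.

Lemma ren_ren : forall t xi zeta, ren xi (ren zeta t) = ren (fun n => xi (zeta n)) t.
Proof.
  induction t; intros xi zeta; simpl; f_equal; auto.
  rewrite IHt; apply ren_ext; intros [|n]; reflexivity.
Qed.

Lemma psub_ext : forall t s1 s2, (forall n, s1 n = s2 n) -> psub s1 t = psub s2 t.
Proof.
  induction t; intros s1 s2 H; simpl; f_equal; auto.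
  apply IHt; intros [|n]; simpl; f_equal; auto.
Qed.

Lemma psub_ren : forall t sg xi, psub sg (ren xi t) = psub (fun n => sg (xi n)) t.
Proof.
  induction t; intros sg xi; simpl; f_equal; auto.
  rewrite IHt; apply psub_ext; intros [|n]; reflexivity.
Qed.

Lemma ren_psub : forall t sg xi, ren xi (psub sg t) = psub (fun n => ren xi (sg n)) t.
Proof.
  induction t; intros sg xi; simpl; f_equal; auto.
  rewrite IHt; apply psub_ext; intros [|n]; simpl; auto.
  rewrite !ren_ren; apply ren_ext; reflexivity.
Qed.

Lemma psub_psub : forall t s1 s2, psub s1 (psub s2 t) = psub (fun n => psub s1 (s2 n)) t.
Proof.
  induction t; intros s1 s2; simpl; f_equal; auto.
  rewrite IHt; apply psub_ext; intros [|n]; simpl; auto.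
  rewrite psub_ren, ren_psub; apply psub_ext; reflexivity.
Qed.

Lemma psub_id : forall t, psub (@DVar Atom) t = t.
Proof.
  induction t; simpl; f_equal; auto.
  rewrite <- IHt at 2; apply psub_ext; intros [|n]; reflexivity.
Qed.

Lemma dlift_ren : forall t k c,
  dlift k c t = ren (fun n => if Nat.ltb n c then n else n + k) t.
Proof.
  induction t; intros k c; simpl; try (f_equal; auto; fail).
  - destruct (Nat.ltb n c); reflexivity.
  - f_equal. rewrite IHt; apply ren_ext; intros [|n]; simpl; auto.
    change (S n <? S c) with (n <? c). destruct (n <? c); reflexivity.
Qed.

Lemma dlift00 : forall a : tm, dlift 0 0 a = a.
Proof.
  intro a. rewrite dlift_ren. rewrite <- (ren_id a) at 2. apply ren_ext.
  intro n. simpl. lia.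
Qed.

Definition rho (n : nat) (s : tm) (m : nat) : tm :=
  match Nat.compare m n with
  | Lt => DVar m
  | Eq => dlift n 0 s
  | Gt => DVar (pred m)
  end.

Lemma dsubst_psub : forall t n s, dsubst t n s = psub (rho n s) t.
Proof.
  induction t; intros k s; simpl; f_equal; auto.
  rewrite IHt; apply psub_ext; intros [|m]; simpl; auto.
  unfold rho; simpl. destruct (Nat.compare m k) eqn:E; simpl; auto.
  - rewrite !dlift_ren, ren_ren; apply ren_ext; intro x; simpl. lia.
  - apply Nat.compare_gt_iff in E. destruct m; [lia| reflexivity].
Qed.

Lemma key : forall t sg a, dsubst (psub (ups sg) t) 0 a = psub (scons a sg) t.
Proof.
  intros. rewrite dsubst_psub, psub_psub; apply psub_ext; intros [|n]; simpl.
  - unfold rho; simpl. apply dlift00.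
  - rewrite psub_ren. rewrite <- (psub_id (sg n)) at 2. apply psub_ext. reflexivity.
Qed.

Lemma dsubst0 : forall b a, dsubst b 0 a = psub (scons a (@DVar Atom)) b.
Proof.
  intros. rewrite dsubst_psub; apply psub_ext; intros [|n]; unfold rho; simpl; auto.
  apply dlift00.
Qed.

Lemma psub_red : forall t t', dred t t' -> forall sg, dred (psub sg t) (psub sg t').
Proof.
  intros t t' H; induction H; intro sg; simpl; try (constructor; auto; fail).
  replace (psub sg (dsubst b 0 a)) with (dsubst (psub (ups sg) b) 0 (psub sg a)).
  - constructor.
  - rewrite key, dsubst0, psub_psub. apply psub_ext; intros [|n]; reflexivity.
Qed.

Definition SNi (t : tm) : Prop := Acc (fun y x => dred x y) t.

Lemma SNi_sn : forall d, SNi d -> strongly_normalizing d.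
Proof.
  intros d H [f [H0 Hf]]. revert f H0 Hf. induction H as [x _ IH].
  intros f H0 Hf. apply (IH (f 1)) with (f := fun n => f (S n)); auto.
  rewrite <- H0; apply Hf.
Qed.

Lemma SN_psub_back : forall sg t, SNi (psub sg t) -> SNi t.
Proof.
  intros sg t H. remember (psub sg t) as u eqn:Eq. revert t Eq.
  induction H as [u _ IH]; intros t E; subst. constructor; intros y Hy.
  eapply IH; [apply psub_red; eauto | reflexivity].
Qed.

Lemma SN_app_l : forall t u, SNi (DApp t u) -> SNi t.
Proof.
  intros t u H. remember (DApp t u) as v eqn:Eq. revert t Eq.
  induction H as [v _ IH]; intros t E; subst. constructor; intros y Hy.
  eapply IH; [apply dred_appl; eauto | reflexivity].
Qed.

Lemma SN_pr1 : forall t, SNi (DPr1 t) -> SNi t.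
Proof.
  intros t H. remember (DPr1 t) as v eqn:Eq. revert t Eq.
  induction H as [v _ IH]; intros t E; subst. constructor; intros y Hy.
  eapply IH; [apply dred_pr1c; eauto | reflexivity].
Qed.

Fixpoint Red (T : ty) (t : tm) : Prop :=
  match T with
  | TAtom _ => SNi t
  | TArr A B => forall u, Red A u -> Red B (DApp t u)
  | TInt A B => Red A (DPr1 t) /\ Red B (DPr2 t)
  end.

Definition neutral (t : tm) : Prop :=
  match t with DLam _ _ | DPair _ _ => False | _ => True end.

Lemma CR : forall T, (forall t, Red T t -> SNi t) /\
  (forall t t', Red T t -> dred t t' -> Red T t') /\
  (forall t, neutral t -> (forall t', dred t t' -> Red T t') -> Red T t).
Proof.
  induction T as [a|A [IA1 [IA2 IA3]] B [IB1 [IB2 IB3]]|A [IA1 [IA2 IA3]] B [IB1 [IB2 IB3]]];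
  simpl.
  - split; [auto | split].
    + intros t t' H Ht. destruct H as [H]. apply H; exact Ht.
    + intros t _ H. constructor; intros y Hy. exact (H y Hy).
  - split; [|split].
    + intros t Ht.
      assert (Hv: Red A (DVar 0)) by (apply IA3; [exact I| intros t' Hr; inversion Hr]).
      apply SN_app_l with (DVar 0). apply IB1. apply Ht. exact Hv.
    + intros t t' Ht Hr u Hu. apply IB2 with (DApp t u); [apply Ht; auto | constructor; auto].
    + intros t Hn H u Hu. assert (Hs := IA1 u Hu). revert Hu.
      induction Hs as [u _ IHu]; intros Hu. apply IB3; [exact I|].
      intros x Hx. inversion Hx; subst.
      * simpl in Hn; contradiction.
      * apply H; auto.
      * apply IHu; auto. apply IA2 with u; auto.
  - split; [|split].
    + intros t [H1 _]. apply SN_pr1. apply IA1; auto.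
    + intros t t' [H1 H2] Hr; split;
        [apply IA2 with (DPr1 t) | apply IB2 with (DPr2 t)]; auto; constructor; auto.
    + intros t Hn H; split; [apply IA3 | apply IB3]; try exact I;
        intros x Hx; inversion Hx; subst; try (simpl in Hn; contradiction).
      * apply (proj1 (H _ ltac:(eassumption))).
      * apply (proj2 (H _ ltac:(eassumption))).
Qed.

Lemma cr1 : forall T t, Red T t -> SNi t.
Proof. intro T; apply (CR T). Qed.
Lemma cr2 : forall T t t', Red T t -> dred t t' -> Red T t'.
Proof. intro T; apply (CR T). Qed.
Lemma cr3 : forall T t, neutral t -> (forall t', dred t t' -> Red T t') -> Red T t.
Proof. intro T; apply (CR T). Qed.

Lemma var_red : forall T n, Red T (DVar n).
Proof. intros; apply cr3; [exact I|]; intros t' H; inversion H. Qed.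

Lemma red_abs : forall A B s b, SNi b ->
  (forall u, Red A u -> Red B (dsubst b 0 u)) ->
  forall u, Red A u -> Red B (DApp (DLam s b) u).
Proof.
  intros A B s b Hb. induction Hb as [b _ IHb]. intros H u Hu.
  assert (Hsu := cr1 _ _ Hu). revert Hu. induction Hsu as [u _ IHu]. intros Hu.
  apply cr3; [exact I|]. intros x Hx. inversion Hx; subst.
  - apply H; auto.
  - match goal with Hr : dred (DLam _ _) _ |- _ => inversion Hr; subst end.
    apply IHb; auto. intros u0 Hu0. apply cr2 with (dsubst b 0 u0); auto.
    rewrite !dsubst0; apply psub_red; auto.
  - apply IHu; auto. apply cr2 with u; auto.
Qed.

Lemma red_pair : forall A B a b, Red A a -> Red B b -> Red (TInt A B) (DPair a b).
Proof.
  intros A B a b Ha Hb. pose proof (cr1 _ _ Ha) as Sa. pose proof (cr1 _ _ Hb) as Sb.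
  revert b Hb Sb Ha. induction Sa as [a _ IHa]. intros b Hb Sb. revert Hb.
  induction Sb as [b _ IHb]. intros Hb Ha.
  split; apply cr3; try exact I; intros x Hx; inversion Hx; subst; auto;
    match goal with Hr : dred (DPair _ _) _ |- _ => inversion Hr; subst end.
  - apply (proj1 (IHa _ ltac:(eassumption) b Hb (cr1 _ _ Hb) (cr2 _ _ _ Ha ltac:(eassumption)))).
  - apply (proj1 (IHb _ ltac:(eassumption) (cr2 _ _ _ Hb ltac:(eassumption)) Ha)).
  - apply (proj2 (IHa _ ltac:(eassumption) b Hb (cr1 _ _ Hb) (cr2 _ _ _ Ha ltac:(eassumption)))).
  - apply (proj2 (IHb _ ltac:(eassumption) (cr2 _ _ _ Hb ltac:(eassumption)) Ha)).
Qed.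

Lemma red_coe : forall A T a T', Red A a -> Red T (DCoe a T').
Proof.
  intros A T a T' Ha. pose proof (cr1 _ _ Ha) as Sa. revert Ha.
  induction Sa as [a _ IH]; intros Ha. apply cr3; [exact I|].
  intros x Hx; inversion Hx; subst. apply IH; auto. apply cr2 with a; auto.
Qed.

Lemma fund : forall omega le R B d T, typed omega le R B d T ->
  forall sg, (forall n T', nth_error B n = Some T' -> Red T' (sg n)) -> Red T (psub sg d).
Proof.
  intros omega le R B d T H; induction H; intros sg Hs; simpl.
  - constructor; intros y Hy; inversion Hy.
  - apply Hs; auto.
  - intros u Hu. apply red_abs with s; auto.
    + apply SN_psub_back with (sg := scons (DVar 0) (@DVar Atom)).
      rewrite <- dsubst0, key. apply cr1 with t. apply IHtyped.
      intros [|n] T' Hn; simpl in *.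
      * apply var_red.
      * apply Hs; auto.
    + intros u0 Hu0. rewrite key. apply IHtyped.
      intros [|n] T' Hn; simpl in *.
      * inversion Hn; subst; auto.
      * apply Hs; auto.
  - exact (IHtyped1 sg Hs _ (IHtyped2 sg Hs)).
  - apply red_pair; auto.
  - exact (proj1 (IHtyped sg Hs)).
  - exact (proj2 (IHtyped sg Hs)).
  - apply red_coe with s; auto.
Qed.

End SN.

Theorem mainTheorem13 :
  forall (Atom : Type) (omega : option Atom) (le : typ Atom -> typ Atom -> Prop),
    is_type_theory le ->
    forall (R : Rchoice) (B : list (typ Atom)) (d : dterm Atom) (s : typ Atom),
      typed omega le R B d s -> strongly_normalizing d.
Proof.
  intros Atom omega le _ R B d s H.
  apply SNi_sn. apply cr1 with s. rewrite <- (psub_id Atom d).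
  apply (fund Atom omega le R B d s H). intros; apply var_red.
Qed.
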